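(* Let $\Omega_\star$ be a discrete filtered set centred at $\omega\in\mathbb{C}$ and let $H$ be an $\Omega_\star$-homotopy. Then there exist a good open covering $(I_i)_{0\le i\le n}$ of $[0,1]$ and positive real numbers $L_0,\dots,L_n$ such that for every $i=0,\dots,n$ and every $t\in I_i$, $H_t\in\mathfrak{R}_{\Omega_\star}(L_i)$, and for every $i=0,\dots,n-1$ and every $t\in I_i\cap I_{i+1}$, $H_t\in\mathfrak{R}_{\Omega_\star}(L_i)\cap\mathfrak{R}_{\Omega_\star}(L_{i+1})$.
   Context: A discrete filtered set centred at $\omega$ is a family $\Omega_\star=(\Omega_L)_{L>0}$ of finite subsets of $\mathbb{C}$ with $\Omega_L\subset D(\omega,L)$, $\Omega_{L_1}\subseteq\Omega_{L_2}$ for $L_1\le L_2$, and $\Omega_L=\{\omega\}$ for small $L>0$. For a path $\lambda:[a,a+l]\to\mathbb{C}$, $\underline\lambda(t)=\lambda(a+tl)$ is its standardization; $\mathcal{L}_\lambda$ is the length. $\mathfrak{R}_{\Omega_\star}(L)$ is the set of piecewise $\mathcal{C}^1$ paths $\lambda$ starting at $\omega$ with $\mathcal{L}_\lambda<L$ which are either constant or such that for some $t_0\in[0,1)$, $\underline\lambda([0,t_0])=\{\omega\}$ and $\underline\lambda((t_0,1])\subset D(\omega,L)\setminus\Omega_L$. A path is $\Omega_\star$-allowed if it is in $\mathfrak{R}_{\Omega_\star}(L)$ for some $L>0$. An $\Omega_\star$-homotopy is a continuous map $H:[0,1]^2\to\mathbb{C}$, $(s,t)\mapsto H_t(s)$,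 having a continuous partial derivative $\partial H/\partial s$, such that each path $H_t$ is $\Omega_\star$-allowed. A good open covering of $[0,1]$ is a finite covering by relatively open connected intervals with no triple intersections. *)

(* Defs.v *)
From Stdlib Require Import Reals.
From Coquelicot Require Import Coquelicot.
Open Scope R_scope.

Fixpoint rsum (f : nat -> R) (n : nat) : R :=
  match n with O => 0 | S m => rsum f m + f m end.

Definition disc (w : C) (r : R) (z : C) : Prop := Cmod (Cminus z w) < r.

Definition finite_set (A : C -> Prop) : Prop :=
  exists l : list C, forall z, A z <-> List.In z l.

(* Discrete filtered set centred at w: Om L is Omega_L (meaningful for L > 0). *)
Definition discrete_filtered_set (w : C) (Om : R -> C -> Prop) : Prop :=
  (forall L, 0 < L -> finite_set (Om L)) /\
  (forall L z, 0 < L -> Om L z -> disc w L z) /\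
  (forall L1 L2 z, 0 < L1 -> L1 <= L2 -> Om L1 z -> Om L2 z) /\
  (exists eps, 0 < eps /\ forall L, 0 < L < eps -> forall z, Om L z <-> z = w).

Definition C1_fun (g : R -> C) : Prop :=
  forall s,
    ex_derive (fun u => fst (g u)) s /\ ex_derive (fun u => snd (g u)) s /\
    continuous (Derive (fun u => fst (g u))) s /\
    continuous (Derive (fun u => snd (g u))) s.

Definition speed (g : R -> C) (s : R) : R :=
  Cmod (Derive (fun u => fst (g u)) s, Derive (fun u => snd (g u)) s).

(* Paths are (standardized) maps [0,1] -> C, given as functions R -> C of which
   only the values on [0,1] matter.
   is_length lam ell : lam is piecewise C^1 on [0,1] (subdivision
   0 = sub 0 < ... < sub k = 1, each piece being the restriction of a C^1 map
   g j) and ell = sum_j int_{sub j}^{sub (j+1)} |g_j'|, the length of lam. *)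
Definition is_length (lam : R -> C) (ell : R) : Prop :=
  exists (k : nat) (sub : nat -> R) (g : nat -> R -> C),
    (1 <= k)%nat /\ sub O = 0 /\ sub k = 1 /\
    (forall j, (j < k)%nat -> sub j < sub (S j)) /\
    (forall j, (j < k)%nat -> C1_fun (g j)) /\
    (forall j s, (j < k)%nat -> sub j <= s <= sub (S j) -> g j s = lam s) /\
    ell = rsum (fun j => RInt (speed (g j)) (sub j) (sub (S j))) k.

Definition piecewise_C1 (lam : R -> C) : Prop := exists ell, is_length lam ell.

Definition in_R (w : C) (Om : R -> C -> Prop) (L : R) (lam : R -> C) : Prop :=
  piecewise_C1 lam /\ lam 0 = w /\
  (exists ell, is_length lam ell /\ ell < L) /\
  ((forall s, 0 <= s <= 1 -> lam s = w) \/
   (exists t0, 0 <= t0 < 1 /\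
      (forall s, 0 <= s <= t0 -> lam s = w) /\
      (forall s, t0 < s <= 1 -> disc w L (lam s) /\ ~ Om L (lam s)))).

Definition allowed (w : C) (Om : R -> C -> Prop) (lam : R -> C) : Prop :=
  exists L, 0 < L /\ in_R w Om L lam.

Definition in_square (s t : R) : Prop := 0 <= s <= 1 /\ 0 <= t <= 1.

Definition cont_on_square (F : R -> R -> C) : Prop :=
  forall s t, in_square s t -> forall eps, 0 < eps -> exists delta, 0 < delta /\
    forall s' t', in_square s' t' -> Rabs (s' - s) < delta -> Rabs (t' - t) < delta ->
      Cmod (Cminus (F s' t') (F s t)) < eps.

(* Omega-homotopy: H s t = H_t(s). *)
Definition Omega_homotopy (w : C) (Om : R -> C -> Prop) (H : R -> R -> C) : Prop :=
  cont_on_square H /\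
  (exists dH : R -> R -> C,
     cont_on_square dH /\
     (forall s t, in_square s t -> forall eps, 0 < eps -> exists delta, 0 < delta /\
        forall h, h <> 0 -> 0 <= s + h <= 1 -> Rabs h < delta ->
          Cmod (Cminus (Cminus (H (s + h) t) (H s t)) (Cmult (RtoC h) (dH s t)))
            <= eps * Rabs h)) /\
  (forall t, 0 <= t <= 1 -> allowed w Om (fun s => H s t)).

Definition rel_open_interval (I : R -> Prop) : Prop :=
  (forall x, I x -> 0 <= x <= 1) /\
  (forall x y z, I x -> I y -> x <= z <= y -> I z) /\
  (forall x, I x -> exists delta, 0 < delta /\
     forall y, 0 <= y <= 1 -> Rabs (y - x) < delta -> I y).

Definition good_open_covering (n : nat) (I : nat -> R -> Prop) : Prop :=
  (forall i, (i <= n)%nat -> rel_open_interval (I i)) /\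
  (forall t, 0 <= t <= 1 -> exists i, (i <= n)%nat /\ I i t) /\
  (forall i j k t, (i <= n)%nat -> (j <= n)%nat -> (k <= n)%nat ->
     i <> j -> j <> k -> i <> k -> ~ (I i t /\ I j t /\ I k t)).

(* Main.v *)
Require Import Defs.
From Stdlib Require Import Reals.
From Coquelicot Require Import Coquelicot.
From Stdlib Require Import Lra Lia ClassicalEpsilon Classical.
Open Scope R_scope.

Lemma Cminus_tri (a b c : C) : Cmod (Cminus a c) <= Cmod (Cminus a b) + Cmod (Cminus b c).
Proof.
  replace (Cminus a c) with (Cplus (Cminus a b) (Cminus b c)).
  - apply Cmod_triangle.
  - destruct a, b, c; unfold Cminus, Cplus, Copp; simpl; f_equal; ring.
Qed.

Lemma Cminus_sym (a b : C) : Cmod (Cminus a b) = Cmod (Cminus b a).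
Proof.
  rewrite <- Cmod_opp. f_equal. destruct a, b; unfold Cminus, Cplus, Copp; simpl; f_equal; ring.
Qed.

Lemma Cmod_self (a : C) : Cmod (Cminus a a) = 0.
Proof.
  replace (Cminus a a) with (RtoC 0). apply Cmod_0.
  destruct a; unfold Cminus, Cplus, Copp, RtoC; simpl; f_equal; ring.
Qed.

Lemma Cmod_neq (a b : C) : a <> b -> 0 < Cmod (Cminus a b).
Proof.
  intro H. apply Cmod_gt_0. intro E. apply H.
  destruct a, b; unfold Cminus, Cplus, Copp in E; simpl in E. injection E; intros.
  f_equal; lra.
Qed.

Lemma Cmod_rev (a b : C) : Rabs (Cmod a - Cmod b) <= Cmod (Cminus a b).
Proof.
  apply Rabs_le; split.
  - pose proof (Cminus_tri b a (RtoC 0)). 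
    replace (Cminus b (RtoC 0)) with b in H by (destruct b; unfold Cminus, Cplus, Copp, RtoC; simpl; f_equal; ring).
    replace (Cminus a (RtoC 0)) with a in H by (destruct a; unfold Cminus, Cplus, Copp, RtoC; simpl; f_equal; ring).
    rewrite Cminus_sym in H. lra.
  - pose proof (Cminus_tri a b (RtoC 0)).
    replace (Cminus b (RtoC 0)) with b in H by (destruct b; unfold Cminus, Cplus, Copp, RtoC; simpl; f_equal; ring).
    replace (Cminus a (RtoC 0)) with a in H by (destruct a; unfold Cminus, Cplus, Copp, RtoC; simpl; f_equal; ring).
    lra.
Qed.

Lemma fst_le (z : C) : Rabs (fst z) <= Cmod z.
Proof. pose proof (Rmax_Cmod z). pose proof (Rmax_l (Rabs (fst z)) (Rabs (snd z))). lra. Qed.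
Lemma snd_le (z : C) : Rabs (snd z) <= Cmod z.
Proof. pose proof (Rmax_Cmod z). pose proof (Rmax_r (Rabs (fst z)) (Rabs (snd z))). lra. Qed.

Definition clamp (x : R) : R := Rmax 0 (Rmin 1 x).
Lemma clamp_in x : 0 <= clamp x <= 1.
Proof. unfold clamp, Rmax, Rmin; repeat destruct Rle_dec; lra. Qed.
Lemma clamp_id x : 0 <= x <= 1 -> clamp x = x.
Proof. unfold clamp, Rmax, Rmin; repeat destruct Rle_dec; lra. Qed.
Lemma clamp_lip x y : Rabs (clamp x - clamp y) <= Rabs (x - y).
Proof. unfold clamp, Rmax, Rmin; repeat destruct Rle_dec; unfold Rabs; repeat destruct Rcase_abs; lra. Qed.
Lemma clamp_dist x s : 0 <= s <= 1 -> Rabs (x - clamp x) <= Rabs (x - s).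
Proof. intros. unfold clamp, Rmax, Rmin; repeat destruct Rle_dec; unfold Rabs; repeat destruct Rcase_abs; lra. Qed.
Lemma clamp_le0 x : x <= 0 -> clamp x = 0.
Proof. unfold clamp, Rmax, Rmin; repeat destruct Rle_dec; lra. Qed.
Lemma clamp_ge1 x : 1 <= x -> clamp x = 1.
Proof. unfold clamp, Rmax, Rmin; repeat destruct Rle_dec; lra. Qed.


Definition ext (f df : R -> R) (s : R) : R := f (clamp s) + (s - clamp s) * df (clamp s).

Lemma ext_deriv (f df : R -> R) :
  (forall s, 0 <= s <= 1 -> forall eps, 0 < eps -> exists d, 0 < d /\
     forall s', 0 <= s' <= 1 -> Rabs (s' - s) < d -> Rabs (df s' - df s) < eps) ->
  (forall s, 0 <= s <= 1 -> forall eps, 0 < eps -> exists d, 0 < d /\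
     forall h, h <> 0 -> 0 <= s + h <= 1 -> Rabs h < d ->
       Rabs (f (s + h) - f s - h * df s) <= eps * Rabs h) ->
  forall s, derivable_pt_lim (ext f df) s (df (clamp s)).
Proof.
  intros Hc Hd s eps Heps.
  destruct (Rlt_le_dec s 0) as [Hs0|Hs0].
  - exists (mkposreal (-s) ltac:(lra)). intros h Hh Hlt. simpl in Hlt.
    unfold ext. assert (s + h < 0) by (unfold Rabs in Hlt; destruct Rcase_abs; lra).
    rewrite !clamp_le0 by lra.
    replace ((f 0 + (s + h - 0) * df 0 - (f 0 + (s - 0) * df 0)) / h - df 0) with 0
      by (field; auto). rewrite Rabs_R0; lra.
  - destruct (Rlt_le_dec 1 s) as [Hs1|Hs1].
    + exists (mkposreal (s - 1) ltac:(lra)). intros h Hh Hlt. simpl in Hlt.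
      unfold ext. assert (1 < s + h) by (unfold Rabs in Hlt; destruct Rcase_abs; lra).
      rewrite !clamp_ge1 by lra.
      replace ((f 1 + (s + h - 1) * df 1 - (f 1 + (s - 1) * df 1)) / h - df 1) with 0
        by (field; auto). rewrite Rabs_R0; lra.
    + assert (Hs : 0 <= s <= 1) by lra.
      destruct (Hd s Hs (eps/4) ltac:(lra)) as [d1 [Hd1 Hd1']].
      destruct (Hc s Hs (eps/4) ltac:(lra)) as [d2 [Hd2 Hd2']].
      exists (mkposreal (Rmin d1 d2) ltac:(apply Rmin_pos; lra)). intros h Hh Hlt. simpl in Hlt.
      pose proof (Rmin_l d1 d2). pose proof (Rmin_r d1 d2).
      rewrite clamp_id by lra.
      unfold ext. rewrite (clamp_id s) by lra.
      set (c := clamp (s + h)).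
      assert (Hc01 : 0 <= c <= 1) by apply clamp_in.
      assert (Hcs : Rabs (c - s) <= Rabs h).
      { pose proof (clamp_lip (s + h) s). fold c in H1. rewrite (clamp_id s) in H1 by lra.
        replace (s + h - s) with h in H1 by ring. exact H1. }
      assert (Hxc : Rabs (s + h - c) <= Rabs h).
      { pose proof (clamp_dist (s + h) s Hs). fold c in H1.
        replace (s + h - s) with h in H1 by ring. exact H1. }
      assert (T1 : Rabs (f c - f s - (c - s) * df s) <= eps / 4 * Rabs h).
      { destruct (Req_dec (c - s) 0) as [E|E].
        - replace c with s by lra. replace (f s - f s - (s - s) * df s) with 0 by ring.
          rewrite Rabs_R0. pose proof (Rabs_pos h). nra.
        - pose proof (Hd1' (c - s) E ltac:(replace (s + (c - s)) with c by ring; lra) ltac:(lra)).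
          replace (s + (c - s)) with c in H1 by ring.
          pose proof (Rabs_pos h). nra. }
      assert (T2 : Rabs ((s + h - c) * (df c - df s)) <= eps / 4 * Rabs h).
      { rewrite Rabs_mult. pose proof (Hd2' c Hc01 ltac:(lra)).
        pose proof (Rabs_pos (s + h - c)). pose proof (Rabs_pos (df c - df s)). nra. }
      replace ((f c + (s + h - c) * df c - (f s + (s - s) * df s)) / h - df s)
        with ((f c - f s - (c - s) * df s + (s + h - c) * (df c - df s)) / h) by (field; auto).
      unfold Rdiv. rewrite Rabs_mult, Rabs_Rinv by auto.
      pose proof (Rabs_triang (f c - f s - (c - s) * df s) ((s + h - c) * (df c - df s))).
      assert (Hh' : 0 < Rabs h) by (apply Rabs_pos_lt; auto).
      apply (Rmult_lt_reg_r (Rabs h)); auto.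
      rewrite Rmult_assoc, Rinv_l by lra. nra.
Qed.

Lemma ext_derive (f df : R -> R) :
  (forall s, 0 <= s <= 1 -> forall eps, 0 < eps -> exists d, 0 < d /\
     forall s', 0 <= s' <= 1 -> Rabs (s' - s) < d -> Rabs (df s' - df s) < eps) ->
  (forall s, 0 <= s <= 1 -> forall eps, 0 < eps -> exists d, 0 < d /\
     forall h, h <> 0 -> 0 <= s + h <= 1 -> Rabs h < d ->
       Rabs (f (s + h) - f s - h * df s) <= eps * Rabs h) ->
  forall s, is_derive (ext f df) s (df (clamp s)) /\ Derive (ext f df) s = df (clamp s)
    /\ continuous (fun u => df (clamp u)) s.
Proof.
  intros Hc Hd s.
  assert (D : is_derive (ext f df) s (df (clamp s))) by (apply is_derive_Reals; apply ext_deriv; auto).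
  split; [exact D|split; [apply is_derive_unique; exact D|]].
  apply continuity_pt_filterlim.
  intros eps Heps.
  destruct (Hc (clamp s) (clamp_in s) eps Heps) as [d [Hd0 Hd']].
  exists d; split; auto. intros x [_ Hx]. simpl in Hx |- *. unfold R_dist in *.
  apply Hd'. apply clamp_in. pose proof (clamp_lip x s). lra.
Qed.


Definition Dhyp (H dH : R -> R -> C) : Prop :=
  forall s t, in_square s t -> forall eps, 0 < eps -> exists delta, 0 < delta /\
        forall h, h <> 0 -> 0 <= s + h <= 1 -> Rabs h < delta ->
          Cmod (Cminus (Cminus (H (s + h) t) (H s t)) (Cmult (RtoC h) (dH s t)))
            <= eps * Rabs h.

Definition G (H dH : R -> R -> C) (t s : R) : C :=
  (ext (fun u => fst (H u t)) (fun u => fst (dH u t)) s,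
   ext (fun u => snd (H u t)) (fun u => snd (dH u t)) s).

Definition sp (dH : R -> R -> C) (t s : R) : R := Cmod (dH (clamp s) t).
Definition ell (dH : R -> R -> C) (t : R) : R := RInt (sp dH t) 0 1.

Lemma comp_c (dH : R -> R -> C) t (pr : C -> R) :
  (forall z, Rabs (pr z) <= Cmod z) ->
  (forall a b, pr (Cminus a b) = pr a - pr b) ->
  cont_on_square dH -> 0 <= t <= 1 ->
  (forall s, 0 <= s <= 1 -> forall eps, 0 < eps -> exists d, 0 < d /\
     forall s', 0 <= s' <= 1 -> Rabs (s' - s) < d -> Rabs (pr (dH s' t) - pr (dH s t)) < eps).
Proof.
  intros Hpr Hlin Hc Ht s Hs eps He.
  destruct (Hc s t (conj Hs Ht) eps He) as [d [Hd Hd']].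
  exists d; split; auto. intros s' Hs' Hl.
  rewrite <- Hlin. eapply Rle_lt_trans; [apply Hpr|]. apply Hd'; auto.
  split; auto. unfold Rminus; rewrite Rplus_opp_r, Rabs_R0; auto.
Qed.

Lemma comp_d (H dH : R -> R -> C) t (pr : C -> R) :
  (forall z, Rabs (pr z) <= Cmod z) ->
  (forall a b h d, pr (Cminus (Cminus a b) (Cmult (RtoC h) d)) = pr a - pr b - h * pr d) ->
  Dhyp H dH -> 0 <= t <= 1 ->
  (forall s, 0 <= s <= 1 -> forall eps, 0 < eps -> exists d, 0 < d /\
     forall h, h <> 0 -> 0 <= s + h <= 1 -> Rabs h < d ->
       Rabs (pr (H (s + h) t) - pr (H s t) - h * pr (dH s t)) <= eps * Rabs h).
Proof.
  intros Hpr Hlin Hd Ht s Hs eps He.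
  destruct (Hd s t (conj Hs Ht) eps He) as [d [Hd0 Hd']].
  exists d; split; auto. intros h Hh H1 H2.
  rewrite <- Hlin. eapply Rle_trans; [apply Hpr|]. apply Hd'; auto.
Qed.

Lemma fst_lin a b : fst (Cminus a b) = fst a - fst b.
Proof. destruct a, b; simpl; ring. Qed.
Lemma snd_lin a b : snd (Cminus a b) = snd a - snd b.
Proof. destruct a, b; simpl; ring. Qed.
Lemma fst_lin2 a b h d : fst (Cminus (Cminus a b) (Cmult (RtoC h) d)) = fst a - fst b - h * fst d.
Proof. destruct a, b, d; simpl; ring. Qed.
Lemma snd_lin2 a b h d : snd (Cminus (Cminus a b) (Cmult (RtoC h) d)) = snd a - snd b - h * snd d.
Proof. destruct a, b, d; simpl; ring. Qed.

Lemma G_props (H dH : R -> R -> C) t : cont_on_square dH -> Dhyp H dH -> 0 <= t <= 1 ->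
  forall s,
  (is_derive (fun u => fst (G H dH t u)) s (fst (dH (clamp s) t)) /\
   Derive (fun u => fst (G H dH t u)) s = fst (dH (clamp s) t) /\
   continuous (fun u => fst (dH (clamp u) t)) s) /\
  (is_derive (fun u => snd (G H dH t u)) s (snd (dH (clamp s) t)) /\
   Derive (fun u => snd (G H dH t u)) s = snd (dH (clamp s) t) /\
   continuous (fun u => snd (dH (clamp u) t)) s).
Proof.
  intros Hc Hd Ht s. split.
  - exact (ext_derive (fun u => fst (H u t)) (fun u => fst (dH u t)) (comp_c dH t fst fst_le fst_lin Hc Ht) (comp_d H dH t fst fst_le fst_lin2 Hd Ht) s).
  - exact (ext_derive (fun u => snd (H u t)) (fun u => snd (dH u t)) (comp_c dH t snd snd_le snd_lin Hc Ht) (comp_d H dH t snd snd_le snd_lin2 Hd Ht) s).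
Qed.

Lemma G_C1 H dH t : cont_on_square dH -> Dhyp H dH -> 0 <= t <= 1 -> Defs.C1_fun (G H dH t).
Proof.
  intros Hc Hd Ht s. destruct (G_props H dH t Hc Hd Ht s) as [[A1 [A2 A3]] [B1 [B2 B3]]].
  split; [eexists; exact A1|]. split; [eexists; exact B1|].
  split.
  - eapply continuous_ext; [|exact A3]. intro u.
    destruct (G_props H dH t Hc Hd Ht u) as [[_ [E _]] _]. rewrite E. reflexivity.
  - eapply continuous_ext; [|exact B3]. intro u.
    destruct (G_props H dH t Hc Hd Ht u) as [_ [_ [E _]]]. rewrite E. reflexivity.
Qed.

Lemma speed_G H dH t : cont_on_square dH -> Dhyp H dH -> 0 <= t <= 1 ->
  forall s, speed (G H dH t) s = sp dH t s.
Proof.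
  intros Hc Hd Ht s. unfold speed, sp.
  destruct (G_props H dH t Hc Hd Ht s) as [[_ [A _]] [_ [B _]]]. rewrite A, B.
  destruct (dH (clamp s) t); reflexivity.
Qed.

Lemma sp_cont dH t : cont_on_square dH -> 0 <= t <= 1 -> forall s, continuous (sp dH t) s.
Proof.
  intros Hc Ht s. apply continuity_pt_filterlim. intros eps He.
  destruct (Hc (clamp s) t (conj (clamp_in s) Ht) eps He) as [d [Hd Hd']].
  exists d; split; auto. intros x [_ Hx]. simpl in Hx |- *. unfold R_dist in *.
  unfold sp. eapply Rle_lt_trans; [apply Cmod_rev|]. apply Hd'.
  split; [apply clamp_in|auto]. pose proof (clamp_lip x s). lra.
  unfold Rminus; rewrite Rplus_opp_r, Rabs_R0; auto.
Qed.

Lemma G_eq H dH t s : 0 <= s <= 1 -> G H dH t s = H s t.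
Proof.
  intro Hs. unfold G, ext. rewrite clamp_id by auto.
  replace (s - s) with 0 by ring. rewrite !Rmult_0_l, !Rplus_0_r. destruct (H s t); reflexivity.
Qed.


Lemma ex_RInt_sp dH t a b : cont_on_square dH -> 0 <= t <= 1 -> ex_RInt (sp dH t) a b.
Proof. intros. apply (@ex_RInt_continuous R_CompleteNormedModule). intros; apply sp_cont; auto. Qed.

Lemma witness H dH t : cont_on_square dH -> Dhyp H dH -> 0 <= t <= 1 ->
  is_length (fun s => H s t) (ell dH t).
Proof.
  intros Hc Hd Ht.
  exists 1%nat, (fun j => if Nat.eqb j 0 then 0 else 1), (fun _ => G H dH t).
  split; [lia|]. split; [reflexivity|]. split; [reflexivity|].
  split. { intros j Hj. assert (j = 0%nat) by lia. subst. simpl. lra. }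
  split. { intros j _. apply G_C1; auto. }
  split. { intros j s Hj Hs. assert (j = 0%nat) by lia. subst. simpl in Hs. apply G_eq. lra. }
  simpl. rewrite Rplus_0_l. unfold ell. apply RInt_ext. intros x _. symmetry. apply speed_G; auto.
Qed.

Lemma rsum_ext (f g : nat -> R) n : (forall j, (j < n)%nat -> f j = g j) -> rsum f n = rsum g n.
Proof.
  induction n; intros E; simpl; auto. rewrite IHn by (intros; apply E; lia). rewrite E by lia. auto.
Qed.

Lemma sub_mono (sub : nat -> R) k : (forall j, (j < k)%nat -> sub j < sub (S j)) ->
  forall j m, (j + m <= k)%nat -> sub j <= sub (j + m)%nat.
Proof.
  intros Hm j m. induction m; intros Hl.
  - rewrite Nat.add_0_r; lra.
  - replace (j + S m)%nat with (S (j + m)) by lia.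
    pose proof (Hm (j + m)%nat ltac:(lia)). pose proof (IHm ltac:(lia)). lra.
Qed.

Lemma length_unique H dH t e : cont_on_square dH -> Dhyp H dH -> 0 <= t <= 1 ->
  is_length (fun s => H s t) e -> e = ell dH t.
Proof.
  intros Hc Hd Ht [k [sub [g [Hk [H0 [H1 [Hm [HC [Hg He]]]]]]]]].
  assert (Hb : forall j, (j <= k)%nat -> 0 <= sub j <= 1).
  { intros j Hj. split.
    - rewrite <- H0. apply (sub_mono sub k Hm 0 j). lia.
    - rewrite <- H1. pose proof (sub_mono sub k Hm j (k - j) ltac:(lia)) as HH. replace (j + (k - j))%nat with k in HH by lia. exact HH. }
  subst e.
  rewrite (rsum_ext _ (fun j => RInt (sp dH t) (sub j) (sub (S j)))).
  2:{ intros j Hj. apply RInt_ext. intros x Hx.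
      rewrite Rmin_left, Rmax_right in Hx by (apply Rlt_le, Hm; auto).
      pose proof (Hb j ltac:(lia)). pose proof (Hb (S j) ltac:(lia)).
      assert (Hx1 : 0 <= x <= 1) by lra.
      rewrite <- (speed_G H dH t Hc Hd Ht x).
      unfold speed.
      destruct (G_props H dH t Hc Hd Ht x) as [[A1 _] [B1 _]].
      assert (L : locally x (fun u => G H dH t u = g j u)).
      { apply (locally_interval _ x (sub j) (sub (S j))); simpl; try lra.
        intros y Hy1 Hy2. rewrite Hg by (auto; lra). apply G_eq. lra. }
      assert (A2 : is_derive (fun u => fst (g j u)) x (fst (dH (clamp x) t))).
      { eapply is_derive_ext_loc; [|exact A1]. eapply filter_imp; [|exact L].
        intros u E; rewrite E; auto. }
      assert (B2 : is_derive (fun u => snd (g j u)) x (snd (dH (clamp x) t))).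
      { eapply is_derive_ext_loc; [|exact B1]. eapply filter_imp; [|exact L].
        intros u E; rewrite E; auto. }
      replace (Derive (fun u => fst (g j u)) x) with (fst (dH (clamp x) t)) by (symmetry; apply is_derive_unique; exact A2).
      replace (Derive (fun u => snd (g j u)) x) with (snd (dH (clamp x) t)) by (symmetry; apply is_derive_unique; exact B2).
      destruct (G_props H dH t Hc Hd Ht x) as [[_ [A3 _]] [_ [B3 _]]]. rewrite A3, B3. auto. }
  assert (forall m, (m <= k)%nat -> rsum (fun j => RInt (sp dH t) (sub j) (sub (S j))) m = RInt (sp dH t) 0 (sub m)).
  { induction m; intros Hmk.
    - simpl. rewrite H0. rewrite RInt_point. auto.
    - simpl. rewrite IHm by lia. rewrite <- (RInt_Chasles (sp dH t) 0 (sub m) (sub (S m)))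
        by (apply ex_RInt_sp; auto). reflexivity. }
  rewrite H2 by lia. rewrite H1. reflexivity.
Qed.

Lemma ell_close dH t t' eps : cont_on_square dH -> 0 <= t <= 1 -> 0 <= t' <= 1 ->
  (forall s, 0 <= s <= 1 -> Cmod (Cminus (dH s t') (dH s t)) < eps) ->
  Rabs (ell dH t' - ell dH t) <= eps.
Proof.
  intros Hc Ht Ht' Hs. unfold ell.
  assert (E : RInt (sp dH t') 0 1 - RInt (sp dH t) 0 1 = RInt (fun x => sp dH t' x - sp dH t x) 0 1).
  { pose proof (RInt_minus (sp dH t') (sp dH t) 0 1 (ex_RInt_sp dH t' 0 1 Hc Ht') (ex_RInt_sp dH t 0 1 Hc Ht)).
    unfold minus, plus, opp in H; simpl in H. unfold Rminus. rewrite <- H. reflexivity. }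
  rewrite E. replace eps with ((1 - 0) * eps) by ring.
  apply abs_RInt_le_const; [lra| |].
  - apply (@ex_RInt_minus R_CompleteNormedModule (sp dH t') (sp dH t)); apply ex_RInt_sp; auto.
  - intros x Hx. unfold sp. rewrite clamp_id by auto.
    eapply Rle_trans; [apply Cmod_rev|]. apply Rlt_le, Hs; auto.
Qed.


Lemma lebesgue (A0 : R -> R -> Prop) :
  (forall s, 0 <= s <= 1 -> exists g, 0 < g /\ A0 s g) ->
  exists d, 0 < d /\ forall x, 0 <= x <= 1 -> exists s g, 0 <= s <= 1 /\ A0 s g /\ Rabs (x - s) < g /\ d <= g.
Proof.
  intros Hg.
  assert (Hch : forall s, exists g : posreal, 0 <= s <= 1 -> A0 s g).
  { intro s. destruct (Rle_dec 0 s); [destruct (Rle_dec s 1)|].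
    - destruct (Hg s ltac:(lra)) as [g [g0 Ag]]. exists (mkposreal g g0). auto.
    - exists (mkposreal 1 Rlt_0_1). intros; lra.
    - exists (mkposreal 1 Rlt_0_1). intros; lra. }
  set (gam := fun s => proj1_sig (constructive_indefinite_description _ (Hch s))).
  assert (Hgam : forall s, 0 <= s <= 1 -> A0 s (gam s)).
  { intro s. unfold gam. destruct (constructive_indefinite_description _ (Hch s)); auto. }
  destruct (compactness_value_1d 0 1 gam) as [d Hd].
  exists d. split; [apply cond_pos|]. intros x Hx.
  apply NNPP. intro Hn. apply (Hd x Hx). intros [t [Ht [H1 H2]]]. apply Hn.
  exists t, (gam t). repeat split; try lra; auto.
Qed.

Lemma unif (F : R -> R -> C) (t : R) (P : R -> C -> Prop) :
  cont_on_square F -> 0 <= t <= 1 ->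
  (forall s, 0 <= s <= 1 -> exists r, 0 < r /\ forall s'' z, 0 <= s'' <= 1 -> Rabs (s'' - s) < r ->
      Cmod (Cminus z (F s t)) < r -> P s'' z) ->
  exists d, 0 < d /\ forall t' s, 0 <= t' <= 1 -> Rabs (t' - t) < d -> 0 <= s <= 1 -> P s (F s t').
Proof.
  intros Hc Ht Hloc.
  destruct (lebesgue (fun s g => forall s' t', in_square s' t' -> Rabs (s' - s) < g -> Rabs (t' - t) < g ->
                        P s' (F s' t'))) as [d [Hd Hd']].
  { intros s Hs. destruct (Hloc s Hs) as [r [Hr Hr']].
    destruct (Hc s t (conj Hs Ht) r Hr) as [de [Hde Hde']].
    exists (Rmin de r). split; [apply Rmin_pos; auto|].
    intros s' t' Hsq H1 H2. pose proof (Rmin_l de r). pose proof (Rmin_r de r).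
    apply Hr'; [apply Hsq|lra|]. apply Hde'; auto; lra. }
  exists d. split; auto. intros t' s Ht' Hl Hs.
  destruct (Hd' s Hs) as [s0 [g [Hs0 [A1 [A2 A3]]]]].
  apply A1; [split; auto|lra|lra].
Qed.

Lemma unif_close (F : R -> R -> C) t eps : cont_on_square F -> 0 <= t <= 1 -> 0 < eps ->
  exists d, 0 < d /\ forall t' s, 0 <= t' <= 1 -> Rabs (t' - t) < d -> 0 <= s <= 1 ->
    Cmod (Cminus (F s t') (F s t)) < eps.
Proof.
  intros Hc Ht He.
  apply (unif F t (fun s z => Cmod (Cminus z (F s t)) < eps)); auto.
  intros s Hs. destruct (Hc s t (conj Hs Ht) (eps/2) ltac:(lra)) as [de [Hde Hde']].
  exists (Rmin de (eps/2)). split; [apply Rmin_pos; lra|].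
  intros s'' z Hs'' H1 H2. pose proof (Rmin_l de (eps/2)). pose proof (Rmin_r de (eps/2)).
  pose proof (Cminus_tri z (F s t) (F s'' t)).
  assert (Cmod (Cminus (F s'' t) (F s t)) < eps/2).
  { apply Hde'; [split; auto|lra|]. unfold Rminus; rewrite Rplus_opp_r, Rabs_R0; lra. }
  rewrite (Cminus_sym (F s t)) in H3. lra.
Qed.

Lemma avoid (l : list C) (p w : C) : (forall q, List.In q l -> q <> w -> q <> p) ->
  exists r, 0 < r /\ forall z, Cmod (Cminus z p) < r -> forall q, List.In q l -> q <> w -> q <> z.
Proof.
  induction l as [|a l IH]; intros Hl.
  - exists 1. split; [lra|]. intros z _ q [].
  - destruct IH as [r [Hr Hr']]. { intros q Hq. apply Hl. right; auto. }
    destruct (classic (a = w)) as [E|E].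
    + exists r. split; auto. intros z Hz q [<-|Hq] Hqw; [congruence|]. apply Hr'; auto.
    + assert (Hap : a <> p) by (apply Hl; [left|]; auto).
      pose proof (Cmod_neq a p Hap).
      exists (Rmin r (Cmod (Cminus a p))). split; [apply Rmin_pos; auto|].
      intros z Hz q [<-|Hq] Hqw.
      * intro Eq. subst z. pose proof (Rmin_r r (Cmod (Cminus a p))). lra.
      * apply Hr'; auto. pose proof (Rmin_l r (Cmod (Cminus a p))). lra.
Qed.

Lemma w_in_Om w Om L : discrete_filtered_set w Om -> 0 < L -> Om L w.
Proof.
  intros [_ [_ [Hmono [eps [He Hsm]]]]] HL.
  set (L1 := Rmin (eps/2) L).
  assert (0 < L1) by (apply Rmin_pos; lra).
  assert (L1 <= L) by apply Rmin_r.
  assert (L1 < eps) by (unfold L1; pose proof (Rmin_l (eps/2) L); lra).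
  apply (Hmono L1); auto. apply Hsm; auto.
Qed.


Lemma local w Om H t : discrete_filtered_set w Om -> Omega_homotopy w Om H -> 0 <= t <= 1 ->
  exists L, 0 < L /\ exists d, 0 < d /\ forall t', 0 <= t' <= 1 -> Rabs (t' - t) < d ->
    in_R w Om L (fun s => H s t').
Proof.
  intros Hdfs Hom Ht.
  destruct Hom as [HcH [[dH [Hc Hd]] Hall]].
  destruct (Hall t Ht) as [L [HL [_ [H0 [[e [He Hlt]] Hbr]]]]].
  rewrite (length_unique H dH t e Hc Hd Ht He) in Hlt.
  destruct (unif_close dH t ((L - ell dH t)/2) Hc Ht ltac:(lra)) as [d1 [Hd1 Hd1']].
  pose proof Hdfs as Hdfs0. destruct Hdfs as [Hfin _]. destruct (Hfin L HL) as [l Hl].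
  destruct (unif H t (fun _ z => Defs.disc w L z /\ forall q, List.In q l -> q <> w -> q <> z) HcH Ht)
    as [d2 [Hd2 Hd2']].
  { intros s Hs.
    assert (Hp : Defs.disc w L (H s t) /\ forall q, List.In q l -> q <> w -> q <> H s t).
    { assert (Hw : Defs.disc w L w) by (unfold Defs.disc; rewrite Cmod_self; auto).
      destruct Hbr as [Hcst | [t0 [Ht0 [Hle Hgt]]]].
      - rewrite Hcst by auto. split; auto.
      - destruct (Rle_dec s t0).
        + rewrite Hle by lra. split; auto.
        + destruct (Hgt s ltac:(lra)) as [Hdi Hno]. split; auto.
          intros q Hq _ E. apply Hno. apply Hl. rewrite <- E; auto. }
    destruct Hp as [Hpd Hpa].
    destruct (avoid l (H s t) w Hpa) as [r [Hr Hr']].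
    unfold Defs.disc in Hpd.
    exists (Rmin r (L - Cmod (Cminus (H s t) w))). split; [apply Rmin_pos; lra|].
    intros s'' z _ _ Hz. pose proof (Rmin_l r (L - Cmod (Cminus (H s t) w))).
    pose proof (Rmin_r r (L - Cmod (Cminus (H s t) w))).
    split.
    - unfold Defs.disc. pose proof (Cminus_tri z (H s t) w). lra.
    - apply Hr'. lra. }
  exists L. split; auto. exists (Rmin d1 d2). split; [apply Rmin_pos; auto|].
  intros t' Ht' Hl'. pose proof (Rmin_l d1 d2). pose proof (Rmin_r d1 d2).
  destruct (Hall t' Ht') as [L' [HL' [_ [H0' [_ Hbr']]]]].
  assert (Hell : ell dH t' < L).
  { pose proof (ell_close dH t t' ((L - ell dH t)/2) Hc Ht Ht' ltac:(intros; apply Hd1'; auto; lra)) as HE.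
    apply Rabs_le_between in HE. lra. }
  split; [exists (ell dH t'); apply witness; auto|].
  split; [exact H0'|].
  split; [exists (ell dH t'); split; auto; apply witness; auto|].
  destruct Hbr' as [Hcst | [t0 [Ht0 [Hle Hgt]]]]; [left; auto|right].
  exists t0. split; auto. split; auto. intros s Hs.
  destruct (Hgt s Hs) as [_ Hno].
  destruct (Hd2' t' s Ht' ltac:(lra) ltac:(lra)) as [Hdi Hav].
  split; auto. intro HO. apply Hl in HO.
  apply (Hav (H s t') HO); auto.
  intro E. apply Hno. rewrite E. apply w_in_Om; auto.
Qed.


Lemma floor_nat m x : 0 <= x <= INR (S m) -> exists i, (i <= m)%nat /\ INR i <= x <= INR i + 1.
Proof.
  revert x; induction m; intros x Hx.
  - exists 0%nat. split; [lia|]. change (INR 1) with 1 in Hx. change (INR 0) with 0. lra.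
  - destruct (Rle_dec x (INR (S m))).
    + destruct (IHm x ltac:(lra)) as [i [Hi Hi']]. exists i; split; [lia|auto].
    + exists (S m). split; [lia|]. rewrite (S_INR (S m)) in Hx. lra.
Qed.

Theorem lemma2p8 (w : C) (Om : R -> C -> Prop) (H : R -> R -> C) :
  discrete_filtered_set w Om ->
  Omega_homotopy w Om H ->
  exists (n : nat) (I : nat -> R -> Prop) (L : nat -> R),
    good_open_covering n I /\
    (forall i, (i <= n)%nat -> 0 < L i) /\
    (forall i t, (i <= n)%nat -> I i t -> in_R w Om (L i) (fun s => H s t)) /\
    (forall i t, (i < n)%nat -> I i t -> I (S i) t ->
       in_R w Om (L i) (fun s => H s t) /\ in_R w Om (L (S i)) (fun s => H s t)).
Proof.
  intros Hdfs Hom.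
  destruct (lebesgue (fun s g => exists L, 0 < L /\ forall t', 0 <= t' <= 1 -> Rabs (t' - s) < 2 * g ->
                                   in_R w Om L (fun s => H s t'))) as [d0 [Hd0 Hd0']].
  { intros s Hs. destruct (local w Om H s Hdfs Hom Hs) as [L [HL [d [Hd Hd']]]].
    exists (d/2). split; [lra|]. exists L. split; auto. intros t' Ht' Hl. apply Hd'; auto. lra. }
  destruct (INR_unbounded (/ d0)) as [n Hn].
  set (N := INR (S n)).
  assert (HNn : N = INR n + 1) by (unfold N; apply S_INR).
  assert (HN0 : 0 < N) by (unfold N; apply lt_0_INR; lia).
  assert (HNd : 1 < d0 * N).
  { assert (/ d0 < N) by lra. apply (Rmult_lt_compat_l d0) in H0; auto.
    rewrite Rinv_r in H0 by lra. exact H0. }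
  set (I := fun i x => 0 <= x <= 1 /\ INR i - /4 < x * N /\ x * N < INR i + 5/4).
  assert (HL : forall i, exists L, 0 < L /\ ((i <= n)%nat -> forall x, I i x -> in_R w Om L (fun s => H s x))).
  { intro i. destruct (Compare_dec.le_lt_dec i n) as [Hi|Hi]; [|exists 1; split; [lra|intros; lia]].
    set (c := (INR i + /2) / N).
    assert (HcN : c * N = INR i + /2) by (unfold c; field; lra).
    assert (Hin : INR i <= INR n) by (apply le_INR; auto).
    assert (Hi0 : 0 <= INR i) by apply pos_INR.
    assert (Hc : 0 <= c <= 1).
    { split.
      - unfold c. apply Rdiv_le_0_compat; lra.
      - unfold c. apply Rle_div_l; lra. }
    destruct (Hd0' c Hc) as [s [g [Hs [[L [HL HL']] [Hcs Hdg]]]]].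
    exists L. split; auto. intros _ x Hx. destruct Hx as [Hx1 [Hx2 Hx3]].
    apply HL'; auto.
    assert (Hxc : Rabs (x - c) < d0).
    { apply (Rmult_lt_reg_r N); auto.
      rewrite <- (Rabs_pos_eq N) at 1 by lra. rewrite <- Rabs_mult.
      replace ((x - c) * N) with (x * N - (INR i + /2)) by (rewrite <- HcN; ring).
      apply Rabs_def1; lra. }
    pose proof (Rabs_triang (x - c) (c - s)). replace (x - c + (c - s)) with (x - s) in H0 by ring.
    lra. }
  set (L := fun i => proj1_sig (constructive_indefinite_description _ (HL i))).
  assert (HLp : forall i, 0 < L i /\ ((i <= n)%nat -> forall x, I i x -> in_R w Om (L i) (fun s => H s x))).
  { intro i. unfold L. destruct (constructive_indefinite_description _ (HL i)). auto. }
  assert (Hsep : forall a b x, (a + 2 <= b)%nat -> I a x -> I b x -> False).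
  { intros a b x Hab [_ [Ha1 Ha2]] [_ [Hb1 Hb2]].
    apply le_INR in Hab. rewrite plus_INR in Hab. simpl in Hab. lra. }
  exists n, I, L. split; [split; [|split]|split; [|split]].
  - intros i _. split; [|split].
    + intros x [Hx _]; auto.
    + intros x y z [Hx1 [Hx2 Hx3]] [Hy1 [Hy2 Hy3]] Hz. split; [lra|].
      assert (x * N <= z * N) by (apply Rmult_le_compat_r; lra).
      assert (z * N <= y * N) by (apply Rmult_le_compat_r; lra). lra.
    + intros x [Hx1 [Hx2 Hx3]].
      set (m := Rmin (x * N - (INR i - /4)) (INR i + 5/4 - x * N)).
      assert (Hm : 0 < m) by (apply Rmin_pos; lra).
      exists (m / N). split; [apply Rdiv_lt_0_compat; lra|].
      intros y Hy Hyx. split; auto.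
      assert (Rabs (y * N - x * N) < m).
      { replace (y * N - x * N) with ((y - x) * N) by ring. rewrite Rabs_mult, (Rabs_pos_eq N) by lra.
        apply Rlt_div_r in Hyx; lra. }
      pose proof (Rmin_l (x * N - (INR i - /4)) (INR i + 5/4 - x * N)).
      pose proof (Rmin_r (x * N - (INR i - /4)) (INR i + 5/4 - x * N)).
      fold m in H1, H2. apply Rabs_def2 in H0. lra.
  - intros t Ht. assert (0 <= t * N <= N) by (split; nra).
    destruct (floor_nat n (t * N) H0) as [i [Hi Hi']]. exists i. split; auto.
    unfold I. split; auto. lra.
  - intros i j k t Hi Hj Hk Hij Hjk Hik [Ii [Ij Ik]].
    assert (((i + 2 <= j) \/ (j + 2 <= i) \/ (i + 2 <= k) \/ (k + 2 <= i) \/ (j + 2 <= k) \/ (k + 2 <= j))%nat) by lia.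
    destruct H0 as [E|[E|[E|[E|[E|E]]]]]; eapply Hsep; eauto.
  - intros i Hi. apply HLp.
  - intros i t Hi Ht. apply (proj2 (HLp i)); auto.
  - intros i t Hi Ht Ht'. split; apply (proj2 (HLp _)); auto; lia.
Qed.
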